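(* Let $R$ be a local renormalisation operator, built from a permutation-invariant map $r:\mathcal{Q}\to\mathbb{R}$ and extended to $\mathring{\mathcal{N}}\cup\mathring{\mathcal{W}}$ by the formula $R(\tau)=q_F\tau+\sum_{\tau'\in\mathcal{Q}}r(\tau')C_-(\tau',\tau)$. Then for every $\tau\in\mathring{\mathcal{N}}\cup\mathring{\mathcal{W}}$, $$\Delta R\tau=(R\otimes\mathrm{Id})\Delta\tau.$$
   Context: Fix $d\ge1$, $\delta>0$. Trees: $\widehat{\mathcal{T}}_r$ is the smallest set containing generators $\mathbf{1},\mathbf{X}_1,\dots,\mathbf{X}_d,\Xi$ and closed under $(\tau_1,\tau_2,\tau_3)\mapsto\mathcal{I}(\tau_1)\mathcal{I}(\tau_2)\mathcal{I}(\tau_3)$ (formal non-commutative tree product of planted trees). Orders: $|\mathbf{1}|=-2$, $|\mathbf{X}_i|=-1$, $|\Xi|=-3+\delta$, $|\mathcal{I}(\tau_1)\mathcal{I}(\tau_2)\mathcal{I}(\tau_3)|=6+\sum|\tau_k|$, $|\mathcal{I}(\tau)|=|\tau|+2$. $\mathrm{Poly}=\{\mathbf{1},\mathbf{X}_1,..,\mathbf{X}_d\}$, $\mathcal{W}=\{|\tau|<-2\}$, $\mathring{\mathcal{W}}=\mathcal{W}\setminus\{\Xi\}$, $\mathcal{N}=\{-2\le|\tau|\le0\}$, $\mathring{\mathcal{N}}=\mathcal{N}\setminus\mathrm{Poly}$, $\widetilde{\mathcal{N}}=\{\tau\in\mathring{\mathcal{N}}:-1<|\tau|<0\}$, $\mathcal{T}_r=\mathcal{W}\cup\mathring{\mathcal{N}}$.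 Standing assumption: no tree in $\mathcal{W}\cup\mathring{\mathcal{N}}$ has integer order. Truncation convention: a tree product of planted trees with positive total order is $0$. Derivative edges: symbols $\mathcal{I}^+_i(\tau)$ for $\tau\in\widetilde{\mathcal{N}}\cup\{\mathbf{X}_i\}$ with $\mathcal{I}^+_i(\mathbf{X}_j)=0$ ($j\ne i$), $\mathcal{I}^+_i(\tau)=0$ for $\tau\in\mathring{\mathcal{N}}\setminus\widetilde{\mathcal{N}}$; symbols $\mathcal{I}^-_i(\tau)$ for $\tau\in\mathcal{T}_r$ (order $|\tau|+1$), with $\mathcal{I}^-_i(\mathbf{X}_i)=\mathcal{I}^+_i(\mathbf{X}_i)$, $\mathcal{I}^-_i(\mathbf{1})=0$, $\mathcal{I}^-_i(\mathbf{X}_j)=0$ for $j\ne i$. $\mathcal{T}_{l,-}$ is the set of planted trees $\mathcal{I}(\tau)$ ($\tau\in\mathcal{T}_r\cup\mathrm{Poly}$), $\mathcal{I}^-_i(\tau)$ ($\tau\in\mathcal{T}_r$), $\mathcal{I}^+_i(\mathbf{X}_i)$; $\mathcal{T}^{\mathrm{cen}}=\{\mathcal{I}(\tau):\tau\in\mathcal{N}\}\cup\{\mathcal{I}^+_i(\tau):\tau\in\widetilde{\mathcal{N}}\cup\{\mathbf{X}_i\}\}$. $\mathrm{Alg}(S)$ is the free unital non-commutative algebra on planted trees $S$ (forest product $\cdot$, unit $1$ = empty forest). Coproduct $\Delta$, recursively: $\Delta\mathcal{I}(\mathbf{1})=\mathcal{I}(\mathbf{1})\otimes\mathcal{I}(\mathbf{1})$;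 $\Delta\mathcal{I}(\mathbf{X}_i)=\mathcal{I}(\mathbf{1})\otimes\mathcal{I}(\mathbf{X}_i)+\mathcal{I}(\mathbf{X}_i)\otimes\mathcal{I}^+_i(\mathbf{X}_i)$; $\Delta\mathcal{I}^+_i(\mathbf{X}_i)=\mathcal{I}^+_i(\mathbf{X}_i)\otimes\mathcal{I}^+_i(\mathbf{X}_i)$; $\Delta w=w\otimes1$, $\Delta\mathcal{I}(w)=\mathcal{I}(w)\otimes1$ ($w\in\mathcal{W}$); for $\tau\in\mathring{\mathcal{N}}$: $\Delta\mathcal{I}(\tau)=\mathcal{I}(\mathbf{1})\otimes\mathcal{I}(\tau)+\sum_i\mathcal{I}(\mathbf{X}_i)\otimes\mathcal{I}^+_i(\tau)+(\mathcal{I}\otimes\mathrm{Id})\Delta\tau$; for $\tau\in\widetilde{\mathcal{N}}$: $\Delta\mathcal{I}^+_i(\tau)=\mathcal{I}^+_i(\mathbf{X}_i)\otimes\mathcal{I}^+_i(\tau)+(\mathcal{I}^+_i\otimes\mathrm{Id})\Delta\tau$; for $\mathcal{I}(\tau_1)\mathcal{I}(\tau_2)\mathcal{I}(\tau_3)\in\mathring{\mathcal{N}}$: $\Delta(\mathcal{I}(\tau_1)\mathcal{I}(\tau_2)\mathcal{I}(\tau_3))=\prod_k\Delta\mathcal{I}(\tau_k)$ with $\prod_k(\sigma_k\otimes a_k)=\sigma_1\sigma_2\sigma_3\otimes a_1\cdot a_2\cdot a_3$; for $\tau\in\mathcal{T}_r$: $\Delta\mathcal{I}^-_i(\tau)=(\mathcal{I}^-_i\otimes\mathrm{Id})\Delta\tau+\mathcal{I}^+_i(\mathbf{X}_i)\otimes\mathcal{I}^+_i(\tau)$.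 $\Delta$ is linear, and on forests multiplicative: $\Delta1=1\otimes1$, $\Delta(\sigma_1\cdots\sigma_n)=(\Delta\sigma_1)\cdots(\Delta\sigma_n)$ componentwise. $C_-(\bar\tau,\tau)$ for $\bar\tau,\tau\in\mathcal{N}\cup\mathcal{W}$, a forest of planted trees in $\mathcal{T}_{l,-}$ or $0$, defined recursively in $\tau$: $C_-(\mathbf{1},\mathbf{1})=\mathcal{I}(\mathbf{1})$; $C_-(\mathbf{1},\mathbf{X}_j)=\mathcal{I}(\mathbf{X}_j)$; $C_-(\mathbf{X}_i,\mathbf{X}_j)=\mathcal{I}^-_i(\mathbf{X}_j)$; $C_-(\mathbf{1},\Xi)=\mathcal{I}(\Xi)$, $C_-(\mathbf{X}_i,\Xi)=\mathcal{I}^-_i(\Xi)$, $C_-(\Xi,\Xi)=1$; for $\tau=\mathcal{I}(\tau_1)\mathcal{I}(\tau_2)\mathcal{I}(\tau_3)$: $C_-(\mathbf{1},\tau)=\mathcal{I}(\tau)$, $C_-(\mathbf{X}_i,\tau)=\mathcal{I}^-_i(\tau)$, $C_-(\mathcal{I}(\bar\tau_1)\mathcal{I}(\bar\tau_2)\mathcal{I}(\bar\tau_3),\tau)=\prod_kC_-(\bar\tau_k,\tau_k)$ (forest product); all other values are $0$. $\mathcal{Q}$ is the set of trees $\mathcal{I}(\tau_1)\mathcal{I}(\tau_2)\mathcal{I}(\tau_3)\in\mathring{\mathcal{N}}\cup\mathring{\mathcal{W}}$ with no $\tau_k\in\{\mathbf{X}_1,\dots,\mathbf{X}_d\}$ and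 at most one $\tau_k=\mathbf{1}$. $q_F$ maps $\mathcal{I}(\tau_1)\mathcal{I}(\tau_2)\mathcal{I}(\tau_3)$ to the forest $\mathcal{I}(\tau_1)\cdot\mathcal{I}(\tau_2)\cdot\mathcal{I}(\tau_3)$. Given $r:\mathcal{Q}\to\mathbb{R}$ invariant under reordering the factors of tree products, the associated local renormalisation operator is $R(\tau)=q_F\tau+\sum_{\tau'\in\mathcal{Q}}r(\tau')C_-(\tau',\tau)\in\mathrm{Alg}(\mathcal{T}_{l,-})$; $R$ is applied linearly to the left tensor factor of $\Delta\tau$. *)

(* Defs.v *)
From Stdlib Require Import Reals List Arith ZArith Permutation Lia.
Import ListNotations.
Open Scope R_scope.
Open Scope bool_scope.

(* Polynomial index i is 0-based: Xv i stands for X_{i+1}, well-formed iff i < d. *)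
Inductive tree : Type :=
| One : tree
| Xv : nat -> tree
| Xi : tree
| Prod : tree -> tree -> tree -> tree.  (* I(t1) I(t2) I(t3), ordered *)

Definition tree_eq_dec (x y : tree) : {x = y} + {x <> y}.
Proof. decide equality; apply Nat.eq_dec. Defined.

Fixpoint wf (d : nat) (t : tree) : Prop :=
  match t with
  | Xv i => (i < d)%nat
  | Prod a b c => wf d a /\ wf d b /\ wf d c
  | _ => True
  end.

Fixpoint ord (delta : R) (t : tree) : R :=
  match t with
  | One => -2
  | Xv _ => -1
  | Xi => -3 + delta
  | Prod a b c => 6 + (ord delta a + ord delta b + ord delta c)
  end.

Definition Rleb (x y : R) : bool := if Rle_dec x y then true else false.
Definition Rltb (x y : R) : bool := if Rlt_dec x y then true else false.

Definition isPoly (t : tree) : bool :=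
  match t with One | Xv _ => true | _ => false end.
Definition isXi (t : tree) : bool := match t with Xi => true | _ => false end.

(** W, N, \mathring N, \widetilde N, \mathring W *)
Definition inW (delta : R) (t : tree) : bool := Rltb (ord delta t) (-2).
Definition inN (delta : R) (t : tree) : bool :=
  Rleb (-2) (ord delta t) && Rleb (ord delta t) 0.
Definition inNr (delta : R) (t : tree) : bool := inN delta t && negb (isPoly t).
Definition inNt (delta : R) (t : tree) : bool :=
  inNr delta t && Rltb (-1) (ord delta t) && Rltb (ord delta t) 0.
Definition inWr (delta : R) (t : tree) : bool := inW delta t && negb (isXi t).

Fixpoint wfb (d : nat) (t : tree) : bool :=
  match t with
  | Xv i => Nat.ltb i d
  | Prod a b c => wfb d a && wfb d b && wfb d c
  | _ => true
  end.
Definition isX (t : tree) : bool := match t with Xv _ => true | _ => false end.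
Definition isOne (t : tree) : bool := match t with One => true | _ => false end.
Definition inQb (d : nat) (delta : R) (t : tree) : bool :=
  match t with
  | Prod a b c =>
      wfb d t
      && (inNr delta t || inWr delta t)
      && negb (isX a) && negb (isX b) && negb (isX c)
      && Nat.leb (Nat.b2n (isOne a) + Nat.b2n (isOne b) + Nat.b2n (isOne c)) 1
  | _ => false
  end.

Inductive planted : Type :=
| PI : tree -> planted
| PIm : nat -> tree -> planted
| PIp : nat -> tree -> planted.

Definition planted_eq_dec (x y : planted) : {x = y} + {x <> y}.
Proof. decide equality; try apply tree_eq_dec; apply Nat.eq_dec. Defined.

(** forests = words in the free non-commutative unital algebra; [] = unit 1 *)
Definition forest := list planted.

Definition forest_eq_dec (x y : forest) : {x = y} + {x <> y} :=
  list_eq_dec planted_eq_dec x y.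

Definition fpair_eq_dec (x y : forest * forest) : {x = y} + {x <> y}.
Proof. decide equality; apply forest_eq_dec. Defined.

(** Smart constructors, None encodes the symbol 0.
    I^+_i(tau) is nonzero only for tau in \widetilde N or tau = X_i. *)
Definition Iplus (delta : R) (i : nat) (t : tree) : option planted :=
  match t with
  | Xv j => if Nat.eq_dec j i then Some (PIp i t) else None
  | _ => if inNt delta t then Some (PIp i t) else None
  end.
Definition Iminus (i : nat) (t : tree) : option planted :=
  match t with
  | One => None
  | Xv j => if Nat.eq_dec j i then Some (PIp i (Xv i)) else None
  | _ => Some (PIm i t)
  end.

Definition Lin (B : Type) := list (R * B).

Definition coef {B} (dec : forall x y : B, {x = y} + {x <> y}) (l : Lin B) (b : B) : R :=
  fold_right (fun cb acc => (if dec (snd cb) b then fst cb else 0) + acc) 0 l.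

Definition lin_eq {B} (dec : forall x y : B, {x = y} + {x <> y}) (l1 l2 : Lin B) : Prop :=
  forall b, coef dec l1 b = coef dec l2 b.

Definition opt_term {B} (c : R) (o : option B) : Lin B :=
  match o with Some b => [(c, b)] | None => [] end.

(** * The coproduct Delta.
    Delta tau lives in span(trees) (x) Alg(T^cen); Delta I(tau) in
    span(planted I(sigma)) (x) Alg; a left entry sigma of [DI] stands for I(sigma). *)

Definition prod3 (delta : R) (l1 l2 l3 : Lin (tree * forest)) : Lin (tree * forest) :=
  flat_map (fun x1 =>
  flat_map (fun x2 =>
  flat_map (fun x3 =>
    let s := Prod (fst (snd x1)) (fst (snd x2)) (fst (snd x3)) in
    if Rltb 0 (ord delta s) then []
    else [(fst x1 * fst x2 * fst x3, (s, snd (snd x1) ++ snd (snd x2) ++ snd (snd x3)))])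
  l3) l2) l1.

Definition DIof (d : nat) (delta : R) (t : tree) (dt : Lin (tree * forest)) : Lin (tree * forest) :=
  match t with
  | One => [(1, (One, [PI One]))]
  | Xv i => [(1, (One, [PI (Xv i)])); (1, (Xv i, [PIp i (Xv i)]))]
  | _ =>
      if inW delta t then [(1, (t, []))]
      else if inNr delta t then
        (1, (One, [PI t]))
        :: flat_map (fun i => match Iplus delta i t with
                              | Some p => [(1, (Xv i, [p]))]
                              | None => [] end) (seq 0 d)
        ++ dt
      else []
  end.

(** Delta t for t in W or in \mathring N (0 outside its domain) *)
Fixpoint Dt (d : nat) (delta : R) (t : tree) : Lin (tree * forest) :=
  match t with
  | Prod a b c =>
      if inW delta t then [(1, (t, []))]
      else if inNr delta t then
        prod3 delta (DIof d delta a (Dt d delta a)) (DIof d delta b (Dt d delta b))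
                    (DIof d delta c (Dt d delta c))
      else []
  | _ => if inW delta t then [(1, (t, []))] else []
  end.

Definition DI (d : nat) (delta : R) (t : tree) : Lin (tree * forest) :=
  DIof d delta t (Dt d delta t).

Definition Dpl (d : nat) (delta : R) (p : planted) : Lin (forest * forest) :=
  match p with
  | PI t => map (fun x => (fst x, ([PI (fst (snd x))], snd (snd x)))) (DI d delta t)
  | PIm i t =>
      flat_map (fun x => opt_term (fst x)
                 (option_map (fun q => ([q], snd (snd x))) (Iminus i (fst (snd x)))))
               (Dt d delta t)
      ++ opt_term 1 (option_map (fun q => ([PIp i (Xv i)], [q])) (Iplus delta i t))
  | PIp i t =>
      match t with
      | Xv j => if Nat.eq_dec j i then [(1, ([p], [p]))] else []
      | _ =>
        (1, ([PIp i (Xv i)], [p]))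
        :: flat_map (fun x => opt_term (fst x)
                 (option_map (fun q => ([q], snd (snd x))) (Iplus delta i (fst (snd x)))))
               (Dt d delta t)
      end
  end.

Definition lmul (l1 l2 : Lin (forest * forest)) : Lin (forest * forest) :=
  flat_map (fun x => map (fun y => (fst x * fst y,
             (fst (snd x) ++ fst (snd y), snd (snd x) ++ snd (snd y)))) l2) l1.

Definition Dforest (d : nat) (delta : R) (f : forest) : Lin (forest * forest) :=
  fold_right (fun p acc => lmul (Dpl d delta p) acc) [(1, ([], []))] f.

Definition Delta_lin (d : nat) (delta : R) (l : Lin forest) : Lin (forest * forest) :=
  flat_map (fun x => map (fun y => (fst x * fst y, snd y)) (Dforest d delta (snd x))) l.

Fixpoint Cm (tb t : tree) {struct t} : option forest :=
  match tb, t with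
  | One, _ => Some [PI t]
  | Xv i, _ => option_map (fun p => [p]) (Iminus i t)
  | Xi, Xi => Some []
  | Prod b1 b2 b3, Prod t1 t2 t3 =>
      match Cm b1 t1, Cm b2 t2, Cm b3 t3 with
      | Some f1, Some f2, Some f3 => Some (f1 ++ f2 ++ f3)
      | _, _, _ => None
      end
  | _, _ => None
  end.

(** A finite list containing (exactly once) every well-formed tb with
    C_-(tb, t) <> 0; see [Cm_cands] and [cands_NoDup] below. *)
Fixpoint cands (d : nat) (t : tree) : list tree :=
  One :: map Xv (seq 0 d) ++
  match t with
  | Xi => [Xi]
  | Prod a b c =>
      flat_map (fun x => flat_map (fun y => map (fun z => Prod x y z) (cands d c))
                                  (cands d b)) (cands d a)
  | _ => []
  end.

Definition qF (t : tree) : forest :=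
  match t with Prod a b c => [PI a; PI b; PI c] | _ => [] end.

Definition Rop (d : nat) (delta : R) (r : tree -> R) (t : tree) : Lin forest :=
  (1, qF t) ::
  flat_map (fun tp => if inQb d delta tp then opt_term (r tp) (Cm tp t) else [])
           (cands d t).

Definition RId (d : nat) (delta : R) (r : tree -> R) (l : Lin (tree * forest))
  : Lin (forest * forest) :=
  flat_map (fun x => map (fun y => (fst x * fst y, (snd y, snd (snd x))))
                         (Rop d delta r (fst (snd x)))) l.

Definition r_perm_inv (d : nat) (delta : R) (r : tree -> R) : Prop :=
  forall a b c a' b' c',
    Permutation [a; b; c] [a'; b'; c'] -> inQb d delta (Prod a b c) = true ->
    r (Prod a b c) = r (Prod a' b' c').

Definition standing (d : nat) (delta : R) : Prop :=
  forall t, wf d t -> (inW delta t || inNr delta t)%bool = true ->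
    t <> Prod One One One -> forall z : Z, ord delta t <> IZR z.

Lemma Cm_cands (d : nat) (t tb : tree) :
  wfb d tb = true -> Cm tb t <> None -> In tb (cands d t).
Proof.
  revert tb; induction t as [| j | | t1 IH1 t2 IH2 t3 IH3]; intros tb Hwf HC;
  destruct tb as [| i | | b1 b2 b3]; simpl in *; try (left; reflexivity);
  try (right; apply in_or_app; left; apply in_map; apply in_seq;
       apply Nat.ltb_lt in Hwf; lia);
  try (exfalso; now apply HC).
  - right; apply in_or_app; right; now left.
  - right; apply in_or_app; right.
    apply andb_prop in Hwf as [Hw Hw3]; apply andb_prop in Hw as [Hw1 Hw2].
    destruct (Cm b1 t1) eqn:E1; [|now exfalso; apply HC].
    destruct (Cm b2 t2) eqn:E2; [|now exfalso; apply HC].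
    destruct (Cm b3 t3) eqn:E3; [|now exfalso; apply HC].
    apply in_flat_map; exists b1; split; [apply IH1; congruence|].
    apply in_flat_map; exists b2; split; [apply IH2; congruence|].
    apply in_map; apply IH3; congruence.
Qed.

Lemma NoDup_prod3 (A B C : list tree) :
  NoDup A -> NoDup B -> NoDup C ->
  NoDup (flat_map (fun x => flat_map (fun y => map (fun z => Prod x y z) C) B) A).
Proof.
  intros HA HB HC.
  assert (HinjC : forall x y, NoDup (map (fun z => Prod x y z) C)).
  { intros x y; apply FinFun.Injective_map_NoDup; [|exact HC].
    intros u v H; now injection H. }
  assert (HBC : forall x, NoDup (flat_map (fun y => map (fun z => Prod x y z) C) B)).
  { intro x; induction HB as [|y B Hy HB IHB]; simpl; [constructor|].
    apply NoDup_app; auto.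
    intros w Hw1 Hw2. apply in_map_iff in Hw1 as [z [<- _]].
    apply in_flat_map in Hw2 as [y' [Hy' Hw2]]. apply in_map_iff in Hw2 as [z' [Heq _]].
    injection Heq; intros; subst; contradiction. }
  induction HA as [|x A Hx HA IHA]; simpl; [constructor|].
  apply NoDup_app; auto.
  intros w Hw1 Hw2.
  apply in_flat_map in Hw1 as [y [_ Hw1]]. apply in_map_iff in Hw1 as [z [<- _]].
  apply in_flat_map in Hw2 as [x' [Hx' Hw2]].
  apply in_flat_map in Hw2 as [y' [_ Hw2]]. apply in_map_iff in Hw2 as [z' [Heq _]].
  injection Heq; intros; subst; contradiction.
Qed.

Lemma cands_NoDup (d : nat) (t : tree) : NoDup (cands d t).
Proof.
  induction t as [| j | | t1 IH1 t2 IH2 t3 IH3]; simpl; constructor;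
  try (rewrite in_app_iff; intros [H|H];
       [apply in_map_iff in H as [? [H _]]; discriminate|
        try (destruct H as [H|H]; [discriminate|contradiction]);
        try contradiction;
        try (apply in_flat_map in H as [? [_ H]]; apply in_flat_map in H as [? [_ H]];
             apply in_map_iff in H as [? [H _]]; discriminate)]);
  try (rewrite ?app_nil_r; apply FinFun.Injective_map_NoDup;
       [intros u v H; now injection H | apply seq_NoDup]).
  - apply NoDup_app.
    + apply FinFun.Injective_map_NoDup; [intros u v H; now injection H | apply seq_NoDup].
    + constructor; [intros []|constructor].
    + intros x H1 [H2|[]]; subst; apply in_map_iff in H1 as [? [H _]]; discriminate.
  - apply NoDup_app.
    + apply FinFun.Injective_map_NoDup; [intros u v H; now injection H | apply seq_NoDup].
    + now apply NoDup_prod3.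
    + intros x H1 H2; apply in_map_iff in H1 as [? [<- _]].
      apply in_flat_map in H2 as [? [_ H]]; apply in_flat_map in H as [? [_ H]];
      apply in_map_iff in H as [? [H _]]; discriminate.
Qed.

(* Main.v *)
Require Import Defs.
From Stdlib Require Import Reals List Arith ZArith Permutation Lia Lra.
Import ListNotations.
Open Scope R_scope.


Ltac rg := unfold forest in *; ring.

Definition sumL {A : Type} (L : list A) (f : A -> R) : R :=
  fold_right (fun x acc => f x + acc) 0 L.
Definition pr {B : Type} (l : Lin B) (g : B -> R) : R :=
  sumL l (fun x => fst x * g (snd x)).

Lemma sumL_nil {A} (f : A -> R) : sumL [] f = 0.
Proof. reflexivity. Qed.
Lemma sumL_cons {A} (x : A) L f : sumL (x :: L) f = f x + sumL L f.
Proof. reflexivity. Qed.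
Lemma sumL_app {A} (L1 L2 : list A) f : sumL (L1 ++ L2) f = sumL L1 f + sumL L2 f.
Proof. induction L1; simpl; [ring|]. unfold sumL in *; simpl; rewrite IHL1; ring. Qed.
Lemma sumL_ext_in {A} (L : list A) f f' :
  (forall x, In x L -> f x = f' x) -> sumL L f = sumL L f'.
Proof.
  induction L; intros H; simpl; [reflexivity|].
  unfold sumL; simpl; rewrite (H a (or_introl eq_refl)).
  fold (sumL L f); fold (sumL L f'); rewrite IHL; auto with datatypes.
Qed.
Lemma sumL_ext {A} (L : list A) f f' :
  (forall x, f x = f' x) -> sumL L f = sumL L f'.
Proof. intros; apply sumL_ext_in; auto. Qed.
Lemma sumL_plus {A} (L : list A) f f' :
  sumL L (fun x => f x + f' x) = sumL L f + sumL L f'.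
Proof. induction L; simpl; [ring|]. unfold sumL in *; simpl; rewrite IHL; ring. Qed.
Lemma sumL_scal {A} (L : list A) c f :
  c * sumL L f = sumL L (fun x => c * f x).
Proof. induction L; unfold sumL in *; simpl; [ring|]. rewrite <- IHL; ring. Qed.
Lemma sumL_zero {A} (L : list A) : sumL L (fun _ => 0) = 0.
Proof. induction L; unfold sumL in *; simpl; [ring|]. rewrite IHL; ring. Qed.
Lemma sumL_swap {A C} (L1 : list A) (L2 : list C) f :
  sumL L1 (fun x => sumL L2 (f x)) = sumL L2 (fun y => sumL L1 (fun x => f x y)).
Proof.
  induction L1; simpl.
  - symmetry; apply sumL_zero.
  - change (sumL (a :: L1) (fun x => sumL L2 (f x))) with (sumL L2 (f a) + sumL L1 (fun x => sumL L2 (f x))).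
    rewrite IHL1, <- sumL_plus. apply sumL_ext; intros; reflexivity.
Qed.
Lemma sumL_flat_map {A C} (L : list A) (F : A -> list C) f :
  sumL (flat_map F L) f = sumL L (fun x => sumL (F x) f).
Proof. induction L; simpl; [reflexivity|]. rewrite sumL_app, IHL; reflexivity. Qed.
Lemma sumL_map {A C} (L : list A) (F : A -> C) f :
  sumL (map F L) f = sumL L (fun x => f (F x)).
Proof. induction L; simpl; [reflexivity|]. unfold sumL in *; simpl; rewrite IHL; reflexivity. Qed.

Lemma pr_nil {B} (g : B -> R) : pr [] g = 0.
Proof. reflexivity. Qed.
Lemma pr_cons {B} (x : R * B) l g : pr (x :: l) g = fst x * g (snd x) + pr l g.
Proof. reflexivity. Qed.
Lemma pr_app {B} (l1 l2 : Lin B) g : pr (l1 ++ l2) g = pr l1 g + pr l2 g.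
Proof. apply sumL_app. Qed.
Lemma pr_ext_in {B} (l : Lin B) g g' :
  (forall x, In x l -> g (snd x) = g' (snd x)) -> pr l g = pr l g'.
Proof. intros H; apply sumL_ext_in; intros x Hx; rewrite H; auto. Qed.
Lemma pr_ext {B} (l : Lin B) g g' : (forall x, g x = g' x) -> pr l g = pr l g'.
Proof. intros H; apply pr_ext_in; auto. Qed.
Lemma pr_plus {B} (l : Lin B) g g' : pr l (fun x => g x + g' x) = pr l g + pr l g'.
Proof. unfold pr; rewrite <- sumL_plus; apply sumL_ext; intros; ring. Qed.
Lemma pr_scal {B} (l : Lin B) c g : c * pr l g = pr l (fun x => c * g x).
Proof. unfold pr; rewrite sumL_scal; apply sumL_ext; intros; ring. Qed.
Lemma pr_zero {B} (l : Lin B) : pr l (fun _ => 0) = 0.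
Proof. unfold pr. transitivity (sumL l (fun _ => 0)); [apply sumL_ext; intros; ring|apply sumL_zero]. Qed.
Lemma pr_flat_map {A B} (L : list A) (F : A -> Lin B) g :
  pr (flat_map F L) g = sumL L (fun x => pr (F x) g).
Proof. apply sumL_flat_map. Qed.
Lemma pr_map {A B} (L : list A) (F : A -> R * B) g :
  pr (map F L) g = sumL L (fun x => fst (F x) * g (snd (F x))).
Proof. apply sumL_map. Qed.
Lemma pr_sumL_swap {A B} (L : list A) (l : Lin B) F :
  sumL L (fun x => pr l (F x)) = pr l (fun b => sumL L (fun x => F x b)).
Proof.
  unfold pr. rewrite sumL_swap. apply sumL_ext; intros; symmetry; apply sumL_scal.
Qed.

Lemma pr_lin_eq {B} dec (l1 l2 : Lin B) :
  (forall g, pr l1 g = pr l2 g) -> lin_eq dec l1 l2.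
Proof.
  intros H b.
  assert (E : forall l, coef dec l b = pr l (fun x => if dec x b then 1 else 0)).
  { induction l; [reflexivity|]. simpl. rewrite IHl. change (pr (a :: l) ?G) with (fst a * G (snd a) + pr l G).
    destruct (dec (snd a) b); ring. }
  rewrite !E; apply H.
Qed.

Lemma pr_lmul l1 l2 g :
  pr (lmul l1 l2) g = pr l1 (fun a => pr l2 (fun b => g (fst a ++ fst b, snd a ++ snd b))).
Proof.
  unfold lmul. rewrite pr_flat_map. unfold pr at 2. apply sumL_ext; intros x.
  rewrite pr_map, pr_scal. unfold pr; apply sumL_ext; intros [c0 [u0 v0]]; destruct x as [c [u v]]; simpl; rg.
Qed.

Lemma pr_Dforest_cons d delta p f g :
  pr (Dforest d delta (p :: f)) g =
  pr (Dpl d delta p) (fun a => pr (Dforest d delta f) (fun b => g (fst a ++ fst b, snd a ++ snd b))).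
Proof. apply pr_lmul. Qed.

Lemma pr_Dforest_app d delta f1 f2 g :
  pr (Dforest d delta (f1 ++ f2)) g =
  pr (Dforest d delta f1) (fun a => pr (Dforest d delta f2)
        (fun b => g (fst a ++ fst b, snd a ++ snd b))).
Proof.
  revert g; induction f1 as [|p f1 IH]; intros g.
  - simpl Dforest at 2. rewrite pr_cons, pr_nil. simpl.
    rewrite Rplus_0_r, Rmult_1_l. apply pr_ext; intros [x y]; reflexivity.
  - simpl app. rewrite !pr_Dforest_cons. apply pr_ext; intros a.
    rewrite IH. apply pr_ext; intros b.
    apply pr_ext; intros c. simpl. rewrite !app_assoc. reflexivity.
Qed.

Lemma pr_Dforest_single d delta p g :
  pr (Dforest d delta [p]) g = pr (Dpl d delta p) g.
Proof.
  rewrite pr_Dforest_cons. apply pr_ext; intros [u v].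
  unfold pr, sumL; simpl; rewrite !app_nil_r; unfold forest in *; ring.
Qed.

Lemma pr_Delta_lin d delta l g :
  pr (Delta_lin d delta l) g = pr l (fun f => pr (Dforest d delta f) g).
Proof.
  unfold Delta_lin. rewrite pr_flat_map. unfold pr at 2. apply sumL_ext; intros x.
  rewrite pr_map, pr_scal. unfold pr; apply sumL_ext; intros; simpl; ring.
Qed.

Lemma pr_RId d delta r l g :
  pr (RId d delta r l) g = pr l (fun a => pr (Rop d delta r (fst a)) (fun f => g (f, snd a))).
Proof.
  unfold RId. rewrite pr_flat_map. unfold pr at 2. apply sumL_ext; intros x.
  rewrite pr_map, pr_scal. unfold pr; apply sumL_ext; intros; simpl; ring.
Qed.

Lemma pr_prod3 delta l1 l2 l3 g :
  pr (prod3 delta l1 l2 l3) g =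
  pr l1 (fun a1 => pr l2 (fun a2 => pr l3 (fun a3 =>
     let s := Prod (fst a1) (fst a2) (fst a3) in
     if Rltb 0 (ord delta s) then 0 else g (s, snd a1 ++ snd a2 ++ snd a3)))).
Proof.
  unfold prod3. rewrite pr_flat_map. unfold pr at 2. apply sumL_ext; intros x1.
  rewrite pr_flat_map, pr_scal. unfold pr at 2. apply sumL_ext; intros x2.
  rewrite pr_flat_map, pr_scal, pr_scal. unfold pr at 2. apply sumL_ext; intros x3.
  simpl. destruct (Rltb 0 _); unfold pr, sumL; simpl; rg.
Qed.

Lemma Rltb_true x y : Rltb x y = true <-> x < y.
Proof. unfold Rltb; destruct Rlt_dec; split; intros; auto; try discriminate; contradiction. Qed.
Lemma Rltb_false x y : Rltb x y = false <-> ~ x < y.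
Proof. unfold Rltb; destruct Rlt_dec; split; intros; auto; try discriminate; contradiction. Qed.
Lemma Rleb_true x y : Rleb x y = true <-> x <= y.
Proof. unfold Rleb; destruct Rle_dec; split; intros; auto; try discriminate; contradiction. Qed.
Lemma Rleb_false x y : Rleb x y = false <-> ~ x <= y.
Proof. unfold Rleb; destruct Rle_dec; split; intros; auto; try discriminate; contradiction. Qed.

Lemma ord_gt delta : 0 < delta -> forall t, -3 < ord delta t.
Proof.
  intros Hd t; induction t; simpl; lra.
Qed.

Lemma in_prod3 delta l1 l2 l3 x :
  In x (prod3 delta l1 l2 l3) ->
  exists x1 x2 x3, In x1 l1 /\ In x2 l2 /\ In x3 l3 /\
    fst (snd x) = Prod (fst (snd x1)) (fst (snd x2)) (fst (snd x3)).
Proof.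
  unfold prod3. intros H.
  apply in_flat_map in H as [x1 [H1 H]].
  apply in_flat_map in H as [x2 [H2 H]].
  apply in_flat_map in H as [x3 [H3 H]].
  exists x1, x2, x3; repeat split; auto.
  destruct (Rltb _ _) in H; [contradiction|].
  destruct H as [H|[]]; subst; reflexivity.
Qed.

Lemma inNt_ord delta t : inNt delta t = true -> -1 < ord delta t.
Proof.
  unfold inNt. intros H. apply andb_prop in H as [H _].
  apply andb_prop in H as [_ H]. now apply Rltb_true.
Qed.

Lemma inN_ord delta t : inN delta t = true -> -2 <= ord delta t.
Proof.
  unfold inN. intros H. apply andb_prop in H as [H _]. now apply Rleb_true.
Qed.

Lemma inNr_ord delta t : inNr delta t = true -> -2 <= ord delta t.
Proof.
  unfold inNr. intros H. apply andb_prop in H as [H _]. now apply inN_ord.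
Qed.

Lemma ord_DI_Dt d delta t :
  (forall x, In x (DI d delta t) -> ord delta (fst (snd x)) <= ord delta t) /\
  (forall x, In x (Dt d delta t) -> ord delta (fst (snd x)) <= ord delta t).
Proof.
  assert (HDI : forall t, (forall x, In x (Dt d delta t) -> ord delta (fst (snd x)) <= ord delta t) ->
            forall x, In x (DI d delta t) -> ord delta (fst (snd x)) <= ord delta t).
  { intros u HT x Hx. unfold DI, DIof in Hx. cbv beta iota in Hx.
    destruct u as [| i | | a b c].
    - destruct Hx as [<-|[]]; simpl; lra.
    - destruct Hx as [<-|[<-|[]]]; simpl; lra.
    - destruct (inW delta Xi); [destruct Hx as [<-|[]]; simpl; lra|].
      destruct (inNr delta Xi) eqn:E; [|contradiction].
      destruct Hx as [<-|Hx]; [apply inNr_ord in E; simpl in *; lra|].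
      apply in_app_or in Hx as [Hx|Hx]; [|auto].
      apply in_flat_map in Hx as [j [_ Hx]]. simpl in Hx.
      destruct (inNt delta Xi) eqn:E2; [|contradiction].
      destruct Hx as [<-|[]]. simpl. apply inNt_ord in E2. simpl in E2. lra.
    - set (u := Prod a b c) in *.
      destruct (inW delta u); [destruct Hx as [<-|[]]; simpl; lra|].
      destruct (inNr delta u) eqn:E; [|contradiction].
      destruct Hx as [<-|Hx]; [apply inNr_ord in E; simpl in *; lra|].
      apply in_app_or in Hx as [Hx|Hx]; [|auto].
      apply in_flat_map in Hx as [j [_ Hx]]. simpl in Hx.
      destruct (inNt delta u) eqn:E2; [|contradiction].
      destruct Hx as [<-|[]]. apply inNt_ord in E2. unfold u in *; simpl in *; lra. }
  induction t as [| i | | a [IA _] b [IB _] c [IC _]].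
  - assert (HT : forall x, In x (Dt d delta One) -> ord delta (fst (snd x)) <= ord delta One).
    { simpl. destruct (inW delta One); [intros x [<-|[]]; simpl; lra| intros x []]. }
    split; auto.
  - assert (HT : forall x, In x (Dt d delta (Xv i)) -> ord delta (fst (snd x)) <= ord delta (Xv i)).
    { simpl. destruct (inW delta (Xv i)); [intros x [<-|[]]; simpl; lra| intros x []]. }
    split; auto.
  - assert (HT : forall x, In x (Dt d delta Xi) -> ord delta (fst (snd x)) <= ord delta Xi).
    { simpl. destruct (inW delta Xi); [intros x [<-|[]]; simpl; lra| intros x []]. }
    split; auto.
  - assert (HT : forall x, In x (Dt d delta (Prod a b c)) -> ord delta (fst (snd x)) <= ord delta (Prod a b c)).
    { intros x Hx. simpl Dt in Hx.
      destruct (inW delta (Prod a b c)); [destruct Hx as [<-|[]]; simpl; lra|].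
      destruct (inNr delta (Prod a b c)); [|contradiction].
      apply in_prod3 in Hx as [x1 [x2 [x3 [H1 [H2 [H3 E]]]]]].
      rewrite E. simpl. specialize (IA _ H1). specialize (IB _ H2). specialize (IC _ H3). lra. }
    split; auto.
Qed.

Lemma inW_Xi delta : delta < 1 -> inW delta Xi = true.
Proof. intros H; apply Rltb_true; simpl; lra. Qed.

Lemma Cm_DI d delta t : delta < 1 ->
  forall x b, In x (DI d delta t) -> Cm b (fst (snd x)) <> None -> Cm b t <> None.
Proof.
  intros Hd1.
  induction t as [| i | | a IA b IB c IC]; intros x bb Hx HC; unfold DI, DIof in Hx; cbv beta iota in Hx.
  - destruct Hx as [<-|[]]; exact HC.
  - destruct Hx as [<-|[<-|[]]]; [|exact HC].
    simpl in HC. destruct bb; simpl in *; try congruence; exfalso; apply HC; reflexivity.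
  - rewrite inW_Xi in Hx by exact Hd1. destruct Hx as [<-|[]]; exact HC.
  - set (u := Prod a b c) in *.
    destruct (inW delta u) eqn:EW.
    { destruct Hx as [<-|[]]; exact HC. }
    destruct (inNr delta u) eqn:E; [|contradiction].
    destruct Hx as [<-|Hx].
    { simpl in HC. destruct bb; simpl in *; congruence. }
    apply in_app_or in Hx as [Hx|Hx].
    { apply in_flat_map in Hx as [j [_ Hx]].
      destruct (Iplus delta j u); [|contradiction]. destruct Hx as [<-|[]].
      destruct bb; simpl in *; try congruence.
      all: try (destruct (Nat.eq_dec j n); congruence). }
    unfold u in Hx; simpl Dt in Hx. fold u in Hx. rewrite EW, E in Hx.
    apply in_prod3 in Hx as [x1 [x2 [x3 [H1 [H2 [H3 Ex]]]]]].
    rewrite Ex in HC.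
    destruct bb as [| j | | b1 b2 b3]; simpl; try congruence.
    + simpl in HC; congruence.
    + simpl in HC.
      destruct (Cm b1 (fst (snd x1))) eqn:E1; [|congruence].
      destruct (Cm b2 (fst (snd x2))) eqn:E2; [|congruence].
      destruct (Cm b3 (fst (snd x3))) eqn:E3; [|congruence].
      destruct (Cm b1 a) eqn:F1; [|exfalso; eapply IA; eauto; congruence].
      destruct (Cm b2 b) eqn:F2; [|exfalso; eapply IB; eauto; congruence].
      destruct (Cm b3 c) eqn:F3; [|exfalso; eapply IC; eauto; congruence].
      congruence.
Qed.

Definition GG (b : tree) (a : tree * forest) (g : forest * forest -> R) : R :=
  match Cm b (fst a) with Some h => g (h, snd a) | None => 0 end.
Definition Dopt d delta (o : option forest) : Lin (forest * forest) :=
  match o with Some f => Dforest d delta f | None => [] end.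
Definition KI d delta u := forall b, wfb d b = true -> forall g,
  pr (Dopt d delta (Cm b u)) g = pr (DI d delta u) (fun a => GG b a g).
Definition KT d delta u := forall b, wfb d b = true ->
  (b = Xi \/ exists b1 b2 b3, b = Prod b1 b2 b3) -> forall g,
  pr (Dopt d delta (Cm b u)) g = pr (Dt d delta u) (fun a => GG b a g).

Lemma Cm_One u : Cm One u = Some [Defs.PI u].
Proof. destruct u; reflexivity. Qed.
Lemma Cm_Xv i u : Cm (Xv i) u = option_map (fun p => [p]) (Iminus i u).
Proof. destruct u; reflexivity. Qed.

Lemma pr_ext0 {B} (l : Lin B) g : (forall x, g x = 0) -> pr l g = 0.
Proof. intros H. rewrite (pr_ext l g (fun _ => 0)) by auto. apply pr_zero. Qed.

Lemma GG_ext b a g g' : (forall x, g x = g' x) -> GG b a g = GG b a g'.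
Proof. intros H; unfold GG; destruct (Cm b (fst a)); auto. Qed.

Lemma GG_pr {B} b a (l : Lin B) F :
  GG b a (fun c => pr l (F c)) = pr l (fun x => GG b a (fun c => F c x)).
Proof. unfold GG; destruct (Cm b (fst a)); [reflexivity|]. symmetry; apply pr_zero. Qed.

Lemma DI_W d delta u : ord delta u < -2 -> DI d delta u = [(1, (u, []))].
Proof.
  intros H. assert (HW : inW delta u = true) by now apply Rltb_true.
  destruct u; simpl in H; try lra; unfold DI, DIof; cbv beta iota; rewrite HW; reflexivity.
Qed.

Lemma Dt_W d delta u : ord delta u < -2 -> Dt d delta u = [(1, (u, []))].
Proof.
  intros H. assert (HW : inW delta u = true) by now apply Rltb_true.
  destruct u; simpl in H; try lra; simpl Dt; rewrite HW; reflexivity.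
Qed.

Lemma Iplus_W delta i u : ord delta u < -2 -> Iplus delta i u = None.
Proof.
  intros H. destruct u; simpl in H; try lra; unfold Iplus;
  destruct (inNt delta _) eqn:E; auto; apply inNt_ord in E; simpl in *; lra.
Qed.

Lemma inNr_of delta u : ord delta u <= 0 -> ~ ord delta u < -2 -> isPoly u = false ->
  inNr delta u = true.
Proof.
  intros H1 H2 H3. unfold inNr, inN. rewrite H3.
  assert (A : Rleb (-2) (ord delta u) = true) by (apply Rleb_true; lra).
  assert (B : Rleb (ord delta u) 0 = true) by (apply Rleb_true; lra).
  rewrite A, B; reflexivity.
Qed.

Definition Extra d delta u (h : tree * forest -> R) : R :=
  if inW delta u then 0 else
  h (One, [Defs.PI u]) + sumL (seq 0 d) (fun j => match Iplus delta j u with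
                                             | Some p => h (Xv j, [p]) | None => 0 end).

Lemma DI_Prod d delta u1 u2 u3 h :
  let u := Prod u1 u2 u3 in
  ord delta u <= 0 ->
  pr (DI d delta u) h = pr (Dt d delta u) h + Extra d delta u h.
Proof.
  intros u Hu. unfold u in *. unfold DI, DIof, Extra. cbv beta iota. fold u. fold u in Hu.
  destruct (inW delta u) eqn:EW.
  - unfold u; simpl Dt; fold u; rewrite EW. rewrite Rplus_0_r; reflexivity.
  - assert (EN : inNr delta u = true).
    { apply inNr_of; auto. now apply Rltb_false. }
    rewrite EN. rewrite pr_cons, pr_app, pr_flat_map. simpl fst; simpl snd.
    rewrite (sumL_ext (seq 0 d) _ (fun j => match Iplus delta j u with
                                   | Some p => h (Xv j, [p]) | None => 0 end)).
    + simpl. ring.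
    + intros j. destruct (Iplus delta j u); unfold pr, sumL; simpl; unfold forest in *; ring.
Qed.

Lemma Dt_T3 d delta u1 u2 u3 : 0 < delta ->
  ord delta (Prod u1 u2 u3) <= 0 -> forall h,
  pr (Dt d delta (Prod u1 u2 u3)) h =
  pr (DI d delta u1) (fun a1 => pr (DI d delta u2) (fun a2 => pr (DI d delta u3) (fun a3 =>
     h (Prod (fst a1) (fst a2) (fst a3), snd a1 ++ snd a2 ++ snd a3)))).
Proof.
  intros Hd Hu h.
  pose proof (ord_gt delta Hd u1) as G1.
  pose proof (ord_gt delta Hd u2) as G2.
  pose proof (ord_gt delta Hd u3) as G3.
  destruct (Rlt_dec (ord delta (Prod u1 u2 u3)) (-2)) as [HW|HW].
  - rewrite Dt_W by exact HW. simpl in HW.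
    rewrite (DI_W d delta u1) by lra. rewrite (DI_W d delta u2) by lra.
    rewrite (DI_W d delta u3) by lra.
    unfold pr, sumL; simpl. unfold forest in *; ring.
  - assert (EW : inW delta (Prod u1 u2 u3) = false) by now apply Rltb_false.
    assert (EN : inNr delta (Prod u1 u2 u3) = true) by (apply inNr_of; auto).
    simpl Dt. rewrite EW, EN. fold (DI d delta u1) (DI d delta u2) (DI d delta u3).
    rewrite pr_prod3.
    apply pr_ext_in; intros x1 H1. apply pr_ext_in; intros x2 H2. apply pr_ext_in; intros x3 H3.
    cbv zeta.
    assert (E : Rltb 0 (ord delta (Prod (fst (snd x1)) (fst (snd x2)) (fst (snd x3)))) = false).
    { apply Rltb_false. simpl.
      pose proof (proj1 (ord_DI_Dt d delta u1) x1 H1).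
      pose proof (proj1 (ord_DI_Dt d delta u2) x2 H2).
      pose proof (proj1 (ord_DI_Dt d delta u3) x3 H3).
      simpl in Hu. lra. }
    rewrite E. reflexivity.
Qed.

Lemma sumL_seq_lt (F : nat -> R) i n s : (i < s)%nat ->
  sumL (seq s n) (fun j => if Nat.eq_dec j i then F j else 0) = 0.
Proof.
  revert s; induction n; intros s H; [reflexivity|].
  simpl seq. rewrite sumL_cons, IHn by lia.
  destruct (Nat.eq_dec s i); [lia|ring].
Qed.

Lemma sumL_seq_in (F : nat -> R) i n s : (s <= i < s + n)%nat ->
  sumL (seq s n) (fun j => if Nat.eq_dec j i then F j else 0) = F i.
Proof.
  revert s; induction n; intros s H; [lia|].
  simpl seq. rewrite sumL_cons.
  destruct (Nat.eq_dec s i).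
  - subst. rewrite sumL_seq_lt by lia. ring.
  - rewrite IHn by lia. ring.
Qed.

Lemma KT_of d delta u1 u2 u3 : 0 < delta ->
  ord delta (Prod u1 u2 u3) <= 0 ->
  KI d delta u1 -> KI d delta u2 -> KI d delta u3 -> KT d delta (Prod u1 u2 u3).
Proof.
  intros Hd Hu K1 K2 K3 b Hwf Hb g. rewrite Dt_T3 by auto.
  destruct Hb as [-> | [b1 [b2 [b3 ->]]]].
  - change (Cm Xi (Prod u1 u2 u3)) with (@None forest). cbn [Dopt]. rewrite pr_nil. symmetry.
    apply pr_ext0; intros a1; apply pr_ext0; intros a2; apply pr_ext0; intros a3. reflexivity.
  - simpl in Hwf. apply andb_prop in Hwf as [Hwf W3]. apply andb_prop in Hwf as [W1 W2].
    set (G := fun c1 c2 c3 : forest * forest =>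
                g (fst c1 ++ fst c2 ++ fst c3, snd c1 ++ snd c2 ++ snd c3)).
    assert (S1 : pr (Dopt d delta (Cm (Prod b1 b2 b3) (Prod u1 u2 u3))) g =
      pr (Dopt d delta (Cm b1 u1)) (fun c1 => pr (Dopt d delta (Cm b2 u2)) (fun c2 =>
        pr (Dopt d delta (Cm b3 u3)) (fun c3 => G c1 c2 c3)))).
    { change (Cm (Prod b1 b2 b3) (Prod u1 u2 u3)) with
        (match Cm b1 u1, Cm b2 u2, Cm b3 u3 with
         | Some f1, Some f2, Some f3 => Some (f1 ++ f2 ++ f3)
         | _, _, _ => None end).
      destruct (Cm b1 u1) as [f1|]; [|reflexivity].
      destruct (Cm b2 u2) as [f2|]; [|simpl; symmetry; apply pr_ext0; intros; reflexivity].
      destruct (Cm b3 u3) as [f3|];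
        [|simpl; symmetry; apply pr_ext0; intros; apply pr_ext0; intros; reflexivity].
      simpl Dopt. rewrite pr_Dforest_app. apply pr_ext; intros c1.
      rewrite pr_Dforest_app. apply pr_ext; intros c2. apply pr_ext; intros c3.
      reflexivity. }
    rewrite S1, K1 by exact W1. apply pr_ext; intros a1.
    transitivity (GG b1 a1 (fun c1 => pr (DI d delta u2) (fun a2 => GG b2 a2 (fun c2 =>
                  pr (DI d delta u3) (fun a3 => GG b3 a3 (fun c3 => G c1 c2 c3)))))).
    { apply GG_ext; intros c1. rewrite K2 by exact W2. apply pr_ext; intros a2.
      apply GG_ext; intros c2. rewrite K3 by exact W3. reflexivity. }
    rewrite GG_pr. apply pr_ext; intros a2.
    transitivity (GG b1 a1 (fun c1 => pr (DI d delta u3) (fun a3 =>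
                     GG b2 a2 (fun c2 => GG b3 a3 (fun c3 => G c1 c2 c3))))).
    { apply GG_ext; intros c1. apply GG_pr. }
    rewrite GG_pr. apply pr_ext; intros a3.
    unfold GG, G; simpl.
    destruct (Cm b1 (fst a1)); destruct (Cm b2 (fst a2)); destruct (Cm b3 (fst a3)); reflexivity.
Qed.

Lemma KI_One d delta u g :
  pr (Dopt d delta (Cm One u)) g = pr (DI d delta u) (fun a => GG One a g).
Proof.
  rewrite Cm_One. cbn [Dopt]. rewrite pr_Dforest_single. simpl Dpl.
  rewrite pr_map. unfold pr; apply sumL_ext; intros x. unfold GG. rewrite Cm_One. reflexivity.
Qed.

Lemma pr_Dpl_PIm d delta i u g :
  pr (Dpl d delta (PIm i u)) g =
  pr (Dt d delta u) (fun a => match Iminus i (fst a) with Some q => g ([q], snd a) | None => 0 end)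
  + match Iplus delta i u with Some q => g ([PIp i (Xv i)], [q]) | None => 0 end.
Proof.
  simpl Dpl. rewrite pr_app, pr_flat_map. f_equal.
  - unfold pr at 2. apply sumL_ext; intros x.
    destruct (Iminus i (fst (snd x))); unfold pr, sumL; simpl; unfold forest in *; ring.
  - destruct (Iplus delta i u); unfold pr, sumL; simpl; unfold forest in *; ring.
Qed.

Lemma K_all d delta : 0 < delta -> delta < 1 ->
  forall u, ord delta u <= 0 -> KI d delta u.
Proof.
  intros Hd Hd1.
  induction u as [| j | | u1 IH1 u2 IH2 u3 IH3]; intros Hu b Hb g.
  - destruct b as [| i | | b1 b2 b3]; [apply KI_One| | |]; unfold GG; cbn; rg.
  - destruct b as [| i | | b1 b2 b3]; [apply KI_One| | |]; unfold GG; cbn; try rg.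
    destruct (Nat.eq_dec j i); cbn; [|rg]. subst.
    destruct (Nat.eq_dec i i); [|congruence]. cbn. unfold forest in *; rg.
  - assert (HX : ord delta Xi < -2) by (simpl; lra).
    destruct b as [| i | | b1 b2 b3]; [apply KI_One| | |]; rewrite (DI_W d delta Xi HX).
    + rewrite Cm_Xv. cbn [Iminus option_map Dopt].
      rewrite pr_Dforest_single, pr_Dpl_PIm, Dt_W, Iplus_W by exact HX.
      cbn. rg.
    + cbn. rg.
    + cbn. rg.
  - assert (G1 := ord_gt delta Hd u1). assert (G2 := ord_gt delta Hd u2).
    assert (G3 := ord_gt delta Hd u3).
    assert (Hu' := Hu). simpl in Hu'.
    assert (K1 : KI d delta u1) by (apply IH1; lra).
    assert (K2 : KI d delta u2) by (apply IH2; lra).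
    assert (K3 : KI d delta u3) by (apply IH3; lra).
    assert (KT3 : KT d delta (Prod u1 u2 u3)) by (apply KT_of; auto).
    destruct b as [| i | | b1 b2 b3]; [apply KI_One| | |]; rewrite DI_Prod by exact Hu.
    + change (Cm (Xv i) (Prod u1 u2 u3)) with (Some [PIm i (Prod u1 u2 u3)]).
      cbn [Dopt]. rewrite pr_Dforest_single, pr_Dpl_PIm. f_equal.
      * apply pr_ext; intros a. unfold GG. rewrite Cm_Xv.
        destruct (Iminus i (fst a)); reflexivity.
      * unfold Extra. destruct (inW delta (Prod u1 u2 u3)) eqn:EW.
        { rewrite Iplus_W; [reflexivity|]. now apply Rltb_true. }
        simpl in Hb. apply Nat.ltb_lt in Hb.
        rewrite (sumL_ext (seq 0 d) _ (fun j => if Nat.eq_dec j i then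
             match Iplus delta j (Prod u1 u2 u3) with
             | Some p => g ([PIp i (Xv i)], [p]) | None => 0 end else 0)).
        -- rewrite (sumL_seq_in (fun j => match Iplus delta j (Prod u1 u2 u3) with
             | Some p => g ([PIp i (Xv i)], [p]) | None => 0 end)) by lia.
           cbn. rg.
        -- intros j. unfold GG. simpl fst. rewrite Cm_Xv. simpl Iminus.
           destruct (Nat.eq_dec j i); destruct (Iplus delta j (Prod u1 u2 u3)); reflexivity.
    + rewrite <- (KT3 Xi Hb (or_introl eq_refl) g).
      unfold Extra. destruct (inW delta (Prod u1 u2 u3)); [rg|].
      cbn [Cm Dopt]. rewrite pr_nil.
      rewrite (sumL_ext (seq 0 d) _ (fun _ => 0)); [unfold GG; simpl; rewrite sumL_zero; rg|].
      intros j; destruct (Iplus delta j (Prod u1 u2 u3)); reflexivity.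
    + rewrite <- (KT3 (Prod b1 b2 b3) Hb (or_intror (ex_intro _ b1 (ex_intro _ b2 (ex_intro _ b3 eq_refl)))) g).
      unfold Extra. destruct (inW delta (Prod u1 u2 u3)); [rg|].
      rewrite (sumL_ext (seq 0 d) _ (fun _ => 0)); [unfold GG; simpl; rewrite sumL_zero; rg|].
      intros j; destruct (Iplus delta j (Prod u1 u2 u3)); reflexivity.
Qed.

Lemma sumL_perm {A} (L L' : list A) h : Permutation L L' -> sumL L h = sumL L' h.
Proof.
  induction 1; simpl; auto.
  - unfold sumL in *; simpl; rewrite IHPermutation; reflexivity.
  - unfold sumL; simpl; ring.
  - congruence.
Qed.

Lemma sumL_filter {A} (L : list A) (p : A -> bool) h :
  (forall x, In x L -> p x = false -> h x = 0) -> sumL L h = sumL (filter p L) h.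
Proof.
  induction L as [|a L IH]; intros H; [reflexivity|].
  simpl filter. rewrite sumL_cons.
  destruct (p a) eqn:E.
  - rewrite sumL_cons, IH; auto with datatypes.
  - rewrite H, IH; auto with datatypes. ring.
Qed.

Lemma sumL_reindex {A} (dec : forall x y : A, {x = y} + {x <> y}) (L1 L2 : list A) h :
  NoDup L1 -> NoDup L2 ->
  (forall x, In x L1 -> h x <> 0 -> In x L2) ->
  (forall x, In x L2 -> h x <> 0 -> In x L1) ->
  sumL L1 h = sumL L2 h.
Proof.
  intros N1 N2 H1 H2.
  set (p1 := fun x => if in_dec dec x L2 then true else false).
  set (p2 := fun x => if in_dec dec x L1 then true else false).
  rewrite (sumL_filter L1 p1), (sumL_filter L2 p2).
  - apply sumL_perm, NoDup_Permutation; try apply NoDup_filter; auto.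
    intros x; rewrite !filter_In; unfold p1, p2.
    destruct (in_dec dec x L1); destruct (in_dec dec x L2); intuition discriminate.
  - intros x Hx Hp. unfold p2 in Hp. destruct (in_dec dec x L1); [discriminate|].
    destruct (Req_dec (h x) 0); auto. exfalso; eauto.
  - intros x Hx Hp. unfold p1 in Hp. destruct (in_dec dec x L2); [discriminate|].
    destruct (Req_dec (h x) 0); auto. exfalso; eauto.
Qed.

Lemma inQb_inv d delta tp : inQb d delta tp = true ->
  wfb d tp = true /\ exists b1 b2 b3, tp = Prod b1 b2 b3.
Proof.
  destruct tp as [| | | b1 b2 b3]; try discriminate. intros H.
  split; [|eauto].
  unfold inQb in H.
  apply andb_prop in H as [H _]. apply andb_prop in H as [H _].
  apply andb_prop in H as [H _]. apply andb_prop in H as [H _].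
  apply andb_prop in H as [H _]. exact H.
Qed.

Lemma Cm_P111 u1 u2 u3 :
  Cm (Prod One One One) (Prod u1 u2 u3) = Some (qF (Prod u1 u2 u3)).
Proof. simpl. rewrite !Cm_One. reflexivity. Qed.

Lemma main_Prod d delta r u1 u2 u3 : 0 < delta -> delta < 1 ->
  ord delta (Prod u1 u2 u3) <= 0 ->
  lin_eq fpair_eq_dec (Delta_lin d delta (Rop d delta r (Prod u1 u2 u3)))
                      (RId d delta r (Dt d delta (Prod u1 u2 u3))).
Proof.
  intros Hd Hd1 Hu. set (t := Prod u1 u2 u3).
  assert (Hu' := Hu). simpl in Hu'.
  assert (G1 := ord_gt delta Hd u1). assert (G2 := ord_gt delta Hd u2).
  assert (G3 := ord_gt delta Hd u3).
  assert (K1 : KI d delta u1) by (apply K_all; auto; lra).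
  assert (K2 : KI d delta u2) by (apply K_all; auto; lra).
  assert (K3 : KI d delta u3) by (apply K_all; auto; lra).
  assert (KT3 : KT d delta t) by (apply KT_of; auto).
  apply pr_lin_eq; intros g.
  rewrite pr_Delta_lin, pr_RId. unfold Rop at 1. rewrite pr_cons, pr_flat_map.
  simpl fst; simpl snd.
  assert (E0 : pr (Dforest d delta (qF t)) g = pr (Dt d delta t) (fun a => GG (Prod One One One) a g)).
  { rewrite <- KT3; [ | reflexivity | right; eauto].
    unfold t; rewrite Cm_P111. reflexivity. }
  unfold t in E0 at 1; simpl qF in E0. rewrite Rmult_1_l, E0.
  set (H' := fun tp a => if inQb d delta tp then r tp * GG tp a g else 0).
  rewrite (sumL_ext (cands d t) _ (fun tp => pr (Dt d delta t) (H' tp))).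
  2:{ intros tp. unfold H'. destruct (inQb d delta tp) eqn:EQ.
      - destruct (inQb_inv d delta tp EQ) as [Hw Hp].
        rewrite <- pr_scal, <- (KT3 tp Hw (or_intror Hp) g).
        destruct (Cm tp t); unfold pr, sumL; simpl; rg.
      - rewrite pr_zero; reflexivity. }
  rewrite pr_sumL_swap, <- pr_plus.
  unfold t. rewrite !(Dt_T3 d delta u1 u2 u3 Hd Hu).
  apply pr_ext_in; intros x1 I1. apply pr_ext_in; intros x2 I2. apply pr_ext_in; intros x3 I3.
  set (s := Prod (fst (snd x1)) (fst (snd x2)) (fst (snd x3))).
  set (F := snd (snd x1) ++ snd (snd x2) ++ snd (snd x3)).
  simpl fst; simpl snd. fold s F.
  unfold Rop. rewrite pr_cons, pr_flat_map. simpl fst; simpl snd.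
  assert (EG : GG (Prod One One One) (s, F) g = g (qF s, F)).
  { unfold GG; simpl fst; unfold s; rewrite Cm_P111; reflexivity. }
  rewrite EG, Rmult_1_l. f_equal.
  rewrite (sumL_reindex tree_eq_dec (cands d (Prod u1 u2 u3)) (cands d s)).
  - apply sumL_ext; intros tp. unfold H'.
    destruct (inQb d delta tp); [|reflexivity].
    unfold GG; simpl fst; simpl snd. destruct (Cm tp s); unfold pr, sumL; simpl; rg.
  - apply cands_NoDup.
  - apply cands_NoDup.
  - intros tp _ Hne. unfold H' in Hne. destruct (inQb d delta tp) eqn:EQ; [|lra].
    destruct (inQb_inv d delta tp EQ) as [Hw _].
    apply Cm_cands; auto. unfold GG in Hne; simpl fst in Hne.
    intros HC; rewrite HC in Hne; apply Hne; ring.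
  - intros tp _ Hne. unfold H' in Hne. destruct (inQb d delta tp) eqn:EQ; [|lra].
    destruct (inQb_inv d delta tp EQ) as [Hw [b1 [b2 [b3 ->]]]].
    apply Cm_cands; auto. unfold GG in Hne; simpl fst in Hne.
    assert (HC : Cm (Prod b1 b2 b3) s <> None).
    { intros HC; rewrite HC in Hne; apply Hne; ring. }
    unfold s in HC. simpl in HC |- *.
    destruct (Cm b1 (fst (snd x1))) eqn:E1; [|congruence].
    destruct (Cm b2 (fst (snd x2))) eqn:E2; [|congruence].
    destruct (Cm b3 (fst (snd x3))) eqn:E3; [|congruence].
    destruct (Cm b1 u1) eqn:F1; [|exfalso; eapply (Cm_DI d delta u1 Hd1); eauto; congruence].
    destruct (Cm b2 u2) eqn:F2; [|exfalso; eapply (Cm_DI d delta u2 Hd1); eauto; congruence].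
    destruct (Cm b3 u3) eqn:F3; [|exfalso; eapply (Cm_DI d delta u3 Hd1); eauto; congruence].
    congruence.
Qed.

Theorem lemma8p7 (d : nat) (delta : R) (r : tree -> R) :
  (1 <= d)%nat -> 0 < delta -> delta < 1 ->
  standing d delta ->
  r_perm_inv d delta r ->
  forall t : tree, wf d t ->
    (inNr delta t || inWr delta t)%bool = true ->
    lin_eq fpair_eq_dec (Delta_lin d delta (Rop d delta r t))
                        (RId d delta r (Dt d delta t)).
Proof.
  intros _ Hd Hd1 _ _ t _ Ht.
  apply Bool.orb_prop in Ht as [H|H]; unfold inNr, inWr in H;
    apply andb_prop in H as [H1 H2].
  - destruct t as [| i | | u1 u2 u3]; try discriminate.
    + apply inN_ord in H1; simpl in H1; lra.
    + apply main_Prod; auto. unfold inN in H1. apply andb_prop in H1 as [_ H1].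
      now apply Rleb_true.
  - destruct t as [| i | | u1 u2 u3]; try discriminate.
    + apply Rltb_true in H1; simpl in H1; lra.
    + apply Rltb_true in H1; simpl in H1; lra.
    + apply main_Prod; auto. apply Rltb_true in H1. lra.
Qed.
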